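(* Let $Q(x,y)=\sum_{j=1}^{k}a_j x^{e_{j1}}y^{e_{j2}}$ with $a_j\in\mathbb{R}$ and $e_{j1},e_{j2}\in\mathbb{Z}$. Define $g_2(x,y)=-\frac12\big(Q(x,y)+Q(x^{-1},y^{-1})\big)$ and $\overline{g_2}(x,y)=1$ if $|g_2(x,y)|\ge1$, $\overline{g_2}(x,y)=0$ otherwise. For an integer $m\ge1$ set $$LC(W(x,x^m))=\frac{1}{2\pi}\int_0^{2\pi}\overline{g_2}(e^{it},e^{imt})\,dt,\qquad LC(W(x,y))=\frac{1}{(2\pi)^2}\int_0^{2\pi}\!\!\int_0^{2\pi}\overline{g_2}(e^{it_1},e^{it_2})\,dt_1\,dt_2.$$ Then $LC(W(x,x^m))\to LC(W(x,y))$ as $m\to\infty$.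
   Context: Motivation for notation: for $n$ larger than all $|e_{ji}|$, $W(x,y)=(xy)^n\big((xy)^n+(xy)^{-n}+Q(x,y)+Q(x^{-1},y^{-1})\big)$ is a polynomial, and $LC(W)$ generalises the limiting proportion of non-unimodular roots. On the torus $|x|=|y|=1$ the function $g_2$ is real-valued since the $a_j$ are real. *)

(* Defs.v *)
From Stdlib Require Import Reals Lra ZArith ClassicalEpsilon.
Open Scope R_scope.

Fixpoint fsum (k : nat) (f : nat -> R) : R :=
  match k with
  | O => 0
  | S k' => fsum k' f + f k'
  end.

(* g_2 on the torus, in angular coordinates x = e^{i t1}, y = e^{i t2}:
   -1/2 (Q(x,y) + Q(1/x,1/y)) = - sum_j a_j cos(e_{j1} t1 + e_{j2} t2). *)
Definition g2_torus (k : nat) (a : nat -> R) (e1 e2 : nat -> Z) (t1 t2 : R) : R :=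
  - fsum k (fun j => a j * cos (IZR (e1 j) * t1 + IZR (e2 j) * t2)).

Definition g2bar (k : nat) (a : nat -> R) (e1 e2 : nat -> Z) (t1 t2 : R) : R :=
  if Rle_dec 1 (Rabs (g2_torus k a e1 e2 t1 t2)) then 1 else 0.

(* Riemann integral of f over [lo,hi]; the value of RiemannInt is independent
   of the integrability proof (RiemannInt_P5).  Default 0 if not integrable. *)
Definition Rint (f : R -> R) (lo hi : R) : R :=
  epsilon (inhabits 0%R)
    (fun l => exists pr : Riemann_integrable f lo hi, RiemannInt pr = l).

Definition LC_curve (k : nat) (a : nat -> R) (e1 e2 : nat -> Z) (m : nat) : R :=
  / (2 * PI) * Rint (fun t => g2bar k a e1 e2 t (INR m * t)) 0 (2 * PI).

Definition LC_torus (k : nat) (a : nat -> R) (e1 e2 : nat -> Z) : R :=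
  / ((2 * PI) ^ 2) *
    Rint (fun t2 => Rint (fun t1 => g2bar k a e1 e2 t1 t2) 0 (2 * PI)) 0 (2 * PI).

(* Main.v *)
Require Import Defs.
From Stdlib Require Import Reals ZArith.
Open Scope R_scope.
From Stdlib Require Import Lra Lia List ClassicalEpsilon Classical FunctionalExtensionality.
From mathcomp Require Import all_boot all_algebra.
From mathcomp Require Import Rstruct complex zify.
Import GRing.Theory Num.Theory.
Open Scope R_scope.

Definition Ec (t : R) : R[i] := Complex (cos t) (sin t).
Lemma cmul (a b c d : R) : ((Complex a b) * (Complex c d))%R = Complex (a*c - b*d) (a*d + b*c).
Proof. reflexivity. Qed.
Lemma cadd (a b c d : R) : ((Complex a b) + (Complex c d))%R = Complex (a+c) (b+d).
Proof. reflexivity. Qed.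
Lemma Ec_mul u v : (Ec u * Ec v)%R = Ec (u + v).
Proof. rewrite /Ec cmul cos_plus sin_plus. f_equal. ring. Qed.
Lemma Ec_pow t m : ((Ec t) ^+ m)%R = Ec (INR m * t).
Proof.
elim: m => [|m IH]. rewrite expr0 /= Rmult_0_l /Ec cos_0 sin_0. reflexivity.
rewrite exprS IH Ec_mul S_INR. f_equal. ring.
Qed.

Lemma Ec_inj x y : 0 <= x < 2*PI -> 0 <= y < 2*PI -> Ec x = Ec y -> x = y.
Proof.
move=> Hx Hy H. case: H => Hc Hs.
have Hs0 : sin (x - y) = 0 by rewrite sin_minus Hc Hs; ring.
have Hc1 : cos (x - y) = 1.
  rewrite cos_minus Hc Hs. have := sin2_cos2 y. rewrite /Rsqr. lra.
case: (sin_eq_0_0 _ Hs0) => z Hz.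
have PIpos := PI_RGT_0.
have Hb : -2 < IZR z < 2.
  split.
  - apply: (Rmult_lt_reg_r PI) => //. nra.
  - apply: (Rmult_lt_reg_r PI) => //. nra.
case: Hb => Hb1 Hb2. apply lt_IZR in Hb1. apply lt_IZR in Hb2.
have : (z = Z.opp 1 \/ z = Z0 \/ z = Zpos xH) by lia.
case=> [Ez|[Ez|Ez]]; rewrite Ez in Hz.
- rewrite Hz in Hc1. rewrite Ropp_mult_distr_l_reverse Rmult_1_l cos_neg cos_PI in Hc1. lra.
- lra.
- rewrite Hz Rmult_1_l cos_PI in Hc1. lra.
Qed.

Lemma C0E : Complex 0 0 = (0 : R[i])%R. Proof. reflexivity. Qed.

Lemma sum_fsum (m : nat) (F : nat -> R) (w : R[i]) :
  (\sum_(j < m) w * Complex (F j) 0 = w * Complex (fsum m F) 0)%R.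
Proof.
elim: m => [|m IH]. by rewrite big_ord0 /= C0E mulr0.
rewrite big_ord_recr /= IH -mulrDr cadd Rplus_0_l. reflexivity.
Qed.

Section Trig.
Variables (k : nat) (c : R) (a th : nat -> R) (n : nat -> Z) (D : nat).
Hypothesis Hn : forall j, (j < k)%N -> Z.le (Z.abs (n j)) (Z.of_nat D).

Definition Tp t := c + fsum k (fun j => a j * cos (IZR (n j) * t + th j)).

Definition half (x : R) := x / 2.
Definition term j : {poly R[i]} :=
  ((Complex (half (a j)) 0 * Ec (th j)) *: 'X^(Z.to_nat (Z.of_nat D + n j))
 + (Complex (half (a j)) 0 * Ec (- th j)) *: 'X^(Z.to_nat (Z.of_nat D - n j)))%R.
Definition pT : {poly R[i]} := (Complex c 0 *: 'X^D + \sum_(j < k) term j)%R.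

Lemma term_eval j t : (j < k)%N ->
  (term j).[Ec t]%R = (Ec (INR D * t) * Complex (a j * cos (IZR (n j) * t + th j)) 0)%R.
Proof.
move=> Hj. have := Hn j Hj => Hb.
rewrite /term hornerD !hornerZ !hornerXn !Ec_pow.
have E1 : INR (Z.to_nat (Z.of_nat D + n j)) = INR D + IZR (n j).
  rewrite INR_IZR_INZ Z2Nat.id; last lia. rewrite plus_IZR -INR_IZR_INZ. reflexivity.
have E2 : INR (Z.to_nat (Z.of_nat D - n j)) = INR D - IZR (n j).
  rewrite INR_IZR_INZ Z2Nat.id; last lia. rewrite minus_IZR -INR_IZR_INZ. reflexivity.
rewrite E1 E2 -!mulrA !Ec_mul.
set u := IZR (n j) * t + th j.
have A1 : th j + (INR D + IZR (n j)) * t = INR D * t + u by rewrite /u; ring.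
have A2 : - th j + (INR D - IZR (n j)) * t = INR D * t - u by rewrite /u; ring.
rewrite A1 A2 /Ec !cmul cadd cos_plus cos_minus sin_plus sin_minus.
f_equal; rewrite /half -?R0E -?RmultE; field.
Qed.

Lemma pT_eval t : pT.[Ec t]%R = (Ec (INR D * t) * Complex (Tp t) 0)%R.
Proof.
rewrite /pT hornerD hornerZ hornerXn Ec_pow horner_sum.
rewrite (eq_bigr (fun j : 'I_k => Ec (INR D * t) * Complex (a j * cos (IZR (n j) * t + th j)) 0)%R);
  last by move=> j _; rewrite term_eval.
rewrite (sum_fsum k (fun j => a j * cos (IZR (n j) * t + th j))) /Tp.
set w := Ec (INR D * t).
rewrite (mulrC _ w) -mulrDr cadd Rplus_0_l. reflexivity.
Qed.

Lemma size_pT : (size pT <= (2 * D).+1)%N.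
Proof.
rewrite /pT. apply: (leq_trans (size_polyD _ _)). rewrite geq_max. apply/andP; split.
  apply: (leq_trans (size_scale_leq _ _)). rewrite size_polyXn. lia.
apply: (big_ind (fun q : {poly R[i]} => size q <= (2 * D).+1)%N).
- by rewrite size_poly0.
- move=> p q Hp Hq. apply: (leq_trans (size_polyD _ _)). by rewrite geq_max Hp Hq.
- move=> j _. have := Hn j (ltn_ord j) => Hb.
  rewrite /term. apply: (leq_trans (size_polyD _ _)). rewrite geq_max. apply/andP; split;
  apply: (leq_trans (size_scale_leq _ _)); rewrite size_polyXn; lia.
Qed.

End Trig.

Lemma in_In (x : R) (l : list R) : x \in l -> In x l.
Proof. elim: l => [//|y l IH]. rewrite inE => /orP [/eqP ->|H]; [by left|by right; apply IH]. Qed.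
Lemma NoDup_uniq (l : list R) : NoDup l -> uniq l.
Proof.
elim: l => [//|y l IH] H. inversion H; subst. rewrite /= IH // andbT.
apply/negP => /in_In. done.
Qed.
Lemma size_length (T : Type) (l : list T) : size l = length l.
Proof. by elim: l => //= x l ->. Qed.

Lemma Ec_neq0 t : Ec t != 0%R.
Proof.
apply/eqP => H. case: H => Hc Hs. have := sin2_cos2 t. rewrite /Rsqr Hc Hs.
rewrite -?R0E. lra.
Qed.

Section TrigRoots.
Variables (k : nat) (c : R) (a th : nat -> R) (n : nat -> Z) (D : nat).
Hypothesis Hn : forall j, (j < k)%N -> Z.le (Z.abs (n j)) (Z.of_nat D).

Lemma trig_roots : (forall t, Tp k c a th n t = 0) \/
  (forall l : list R, NoDup l -> (forall x, In x l -> 0 <= x < 2*PI /\ Tp k c a th n x = 0) ->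
     (length l <= 2 * D)%coq_nat).
Proof.
case: (eqVneq (pT k c a th n D) 0%R) => H.
- left => t. have := pT_eval k c a th n D Hn t. rewrite H horner0 => /esym /eqP.
  rewrite mulf_eq0 (negbTE (Ec_neq0 _)) /= => /eqP Ht. case: Ht => ->. reflexivity.
- right => l Hl Hx.
  have Hs := max_poly_roots H (rs := map Ec l).
  have Ha : all (root (pT k c a th n D)) (map Ec l).
    apply/allP => z /mapP [x Hxl ->]. rewrite /root (pT_eval k c a th n D Hn).
    have [_ ->] := Hx x (in_In _ _ Hxl). rewrite -R0E C0E mulr0. done.
  have Hu : uniq (map Ec l).
    rewrite map_inj_in_uniq; first exact: NoDup_uniq.
    move=> x y Hxl Hyl. apply: Ec_inj; [exact: (proj1 (Hx x (in_In _ _ Hxl))) | exact: (proj1 (Hx y (in_In _ _ Hyl)))].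
  have := Hs Ha Hu. rewrite size_map size_length => H1.
  have H2 := size_pT k c a th n D Hn. have := leq_trans H1 H2. rewrite ltnS => /leP. done.
Qed.
End TrigRoots.

From Coquelicot Require Import Coquelicot.
Open Scope R_scope.

Lemma Rint_RInt f a b : ex_RInt f a b -> Rint f a b = RInt f a b.
Proof.
move=> H. rewrite /Rint.
have pr := ex_RInt_Reals_0 _ _ _ H.
have Ex : exists l, exists pr : Riemann_integrable f a b, RiemannInt pr = l.
  by exists (RiemannInt pr); exists pr.
have [pr' <-] := epsilon_spec (inhabits 0) _ Ex.
by rewrite (RInt_Reals f a b pr').
Qed.

Lemma cos_perZ x z : cos (x + 2 * IZR z * PI) = cos x.
Proof.
case: (Z_le_gt_dec 0 z) => Hz.
- have -> : IZR z = INR (Z.to_nat z) by rewrite INR_IZR_INZ Z2Nat.id.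
  apply cos_period.
- have -> : IZR z = - INR (Z.to_nat (Z.opp z)).
    rewrite INR_IZR_INZ Z2Nat.id; last lia. rewrite opp_IZR. ring.
  rewrite -(cos_period (x + 2 * - INR (Z.to_nat (Z.opp z)) * PI) (Z.to_nat (Z.opp z))).
  f_equal. ring.
Qed.

Lemma fsum_ext k f g : (forall j, (j < k)%coq_nat -> f j = g j) -> fsum k f = fsum k g.
Proof.
elim: k => [//|k IH] H /=. rewrite IH; last by move=> j Hj; apply H; lia.
by rewrite H //; lia.
Qed.

Lemma g2_per k a e1 e2 t1 t2 j :
  g2_torus k a e1 e2 t1 (t2 + 2 * PI * INR j) = g2_torus k a e1 e2 t1 t2.
Proof.
rewrite /g2_torus. f_equal. apply fsum_ext => i _. f_equal.
transitivity (cos (IZR (e1 i) * t1 + IZR (e2 i) * t2 + 2 * IZR (Z.mul (e2 i) (Z.of_nat j)) * PI));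
  last by apply cos_perZ.
f_equal. rewrite mult_IZR -INR_IZR_INZ. ring.
Qed.

Lemma g2bar_per k a e1 e2 t1 t2 j :
  g2bar k a e1 e2 t1 (t2 + 2 * PI * INR j) = g2bar k a e1 e2 t1 t2.
Proof. by rewrite /g2bar g2_per. Qed.

Definition breaks (phi : R -> R) (Z : list R) (A B : R) :=
  forall x y, A <= x -> x <= y -> y <= B -> (forall z, In z Z -> ~ (x <= z <= y)) -> phi x = phi y.

Lemma breaks_open_int (phi : R -> R) (Z : list R) : forall A B, A <= B ->
  (forall x y, A < x -> x <= y -> y < B -> (forall z, In z Z -> ~ (x <= z <= y)) -> phi x = phi y) ->
  ex_RInt phi A B.
Proof.
elim: Z => [|z Z IH] A B HAB H.
- case: (Req_dec A B) => [<-|HAB']; first by apply ex_RInt_point.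
  apply: (ex_RInt_ext (fun _ => phi ((A + B) / 2))); last by apply ex_RInt_const.
  move=> x. rewrite Rmin_left // Rmax_right // => Hx.
  case: (Rle_dec x ((A+B)/2)) => Hxm.
  + symmetry. apply H => //; lra.
  + apply H => //; lra.
- case: (classic (A < z < B)) => Hz.
  + apply: (ex_RInt_Chasles _ _ z).
    * apply IH; first lra. move=> x y Hx Hxy Hy Hn. apply H => //; first lra.
      move=> w [<-|Hw]; first lra. by apply Hn.
    * apply IH; first lra. move=> x y Hx Hxy Hy Hn. apply H => //; first lra.
      move=> w [<-|Hw]; first lra. by apply Hn.
  + apply IH => // x y Hx Hxy Hy Hn. apply H => //.
    move=> w [<-|Hw]; first lra. by apply Hn.
Qed.

Lemma breaks_int (phi : R -> R) Z A B : A <= B -> breaks phi Z A B -> ex_RInt phi A B.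
Proof.
move=> HAB H. apply breaks_open_int with Z => // x y Hx Hxy Hy Hn. apply H => //; lra.
Qed.

Lemma ex_RInt_sub (f : R -> R) a b x y : a <= x -> x <= y -> y <= b -> ex_RInt f a b -> ex_RInt f x y.
Proof.
move=> H1 H2 H3 H. apply: (ex_RInt_Chasles_2 _ a). lra.
apply: (ex_RInt_Chasles_1 _ _ _ b). lra. done.
Qed.

Lemma RInt_split (g : R -> R) (h : R) (m : nat) : 0 <= h -> ex_RInt g 0 (INR m * h) ->
  RInt g 0 (INR m * h) = fsum m (fun j => RInt g (INR j * h) (INR (S j) * h)).
Proof.
move=> Hh. elim: m => [|m IH] H /=.
- rewrite Rmult_0_l RInt_point. reflexivity.
- have Hm : 0 <= INR m * h by apply Rmult_le_pos; [apply pos_INR|].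
  have Hm1 : INR m * h <= INR (S m) * h by rewrite S_INR; lra.
  rewrite -IH; last by apply: (ex_RInt_sub _ 0 (INR (S m) * h)) => //; lra.
  rewrite -(RInt_Chasles g 0 (INR m * h) (INR (S m) * h)).
  + reflexivity.
  + by apply: (ex_RInt_sub _ 0 (INR (S m) * h)) => //; lra.
  + by apply: (ex_RInt_sub _ 0 (INR (S m) * h)) => //; lra.
Qed.

Definition inI (x y z : R) : R := if Rle_dec x z then if Rle_dec z y then 1 else 0 else 0.

Fixpoint lsum (Z : list R) (F : R -> R) : R :=
  match Z with nil => 0 | z :: Z' => F z + lsum Z' F end.

Lemma inI_01 x y z : 0 <= inI x y z <= 1.
Proof. rewrite /inI. destruct (Rle_dec x z); [destruct (Rle_dec z y)|]; simpl; lra. Qed.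

Definition cnt h z m := fsum m (fun j => inI (INR j * h) (INR (S j) * h) z).
Lemma count2 h z m : 0 < h ->
  0 <= cnt h z m /\ cnt h z m <= 2 /\ (INR m * h <= z -> cnt h z m <= 1) /\ (INR m * h < z -> cnt h z m = 0).
Proof.
move=> Hh. elim: m => [|m IH].
- rewrite /cnt /=. lra.
- have -> : cnt h z (S m) = cnt h z m + inI (INR m * h) (INR (S m) * h) z by reflexivity.
  case: IH => [H0 [H1 [H2 H3]]].
  rewrite S_INR. rewrite /inI.
  case: (Rle_dec ((INR m) * h) z) => Hz1; case: (Rle_dec z ((INR m + 1) * h)) => Hz2; cbn [is_left].
  + case: (Req_dec (INR m * h) z) => Hz.
    * have := H2 (Req_le _ _ Hz). lra.
    * have : INR m * h < z by lra. move=> /H3. lra.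
  + have : INR m * h < z by lra. move=> /H3. lra.
  + lra.
  + lra.
Qed.

Lemma fsum_plus m f g : fsum m (fun j => f j + g j) = fsum m f + fsum m g.
Proof. elim: m => [|m IH] /=; [ring|rewrite IH; ring]. Qed.
Lemma fsum_minus m f g : fsum m (fun j => f j - g j) = fsum m f - fsum m g.
Proof. elim: m => [|m IH] /=; [ring|rewrite IH; ring]. Qed.
Lemma fsum_scal m c f : fsum m (fun j => c * f j) = c * fsum m f.
Proof. elim: m => [|m IH] /=; [ring|rewrite IH; ring]. Qed.
Lemma fsum_zero m : fsum m (fun _ => 0) = 0.
Proof. elim: m => [|m IH] /=; [ring|rewrite IH; ring]. Qed.
Lemma fsum_abs m f : Rabs (fsum m f) <= fsum m (fun j => Rabs (f j)).
Proof.
elim: m => [|m IH] /=. rewrite Rabs_R0. lra.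
apply: Rle_trans; first by apply Rabs_triang. lra.
Qed.
Lemma fsum_le m f g : (forall j, (j < m)%coq_nat -> f j <= g j) -> fsum m f <= fsum m g.
Proof.
elim: m => [|m IH] H /=. lra.
have := H m (Nat.lt_succ_diag_r m). have : fsum m f <= fsum m g by apply IH => j Hj; apply H; lia.
lra.
Qed.

Lemma fsum_lsum m Z (G : nat -> R -> R) :
  fsum m (fun j => lsum Z (fun z => G j z)) = lsum Z (fun z => fsum m (fun j => G j z)).
Proof.
elim: Z => [|z Z IH] /=. by apply fsum_zero.
by rewrite fsum_plus IH.
Qed.

Lemma lsum_le Z F c : (forall z, F z <= c) -> lsum Z F <= c * INR (length Z).
Proof.
move=> H. elim: Z => [|z Z IH]. simpl; lra.
change (length (z :: Z)) with (S (length Z)). rewrite S_INR.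
change (lsum (z :: Z) F) with (F z + lsum Z F). have := H z. lra.
Qed.

Lemma lsum_ge1 Z F z : (forall w, 0 <= F w) -> In z Z -> 1 <= F z -> 1 <= lsum Z F.
Proof.
move=> H. elim: Z => [//|w Z IH] /= [->|Hz] Hf.
- have : 0 <= lsum Z F by clear IH; elim: Z => [|u Z IH'] /=; [lra|have := H u; lra].
  lra.
- have := IH Hz Hf. have := H w. lra.
Qed.

Lemma RInt_const_R a b c : RInt (fun _ => c) a b = (b - a) * c.
Proof. rewrite RInt_const. reflexivity. Qed.

Lemma riemann_err (phi : R -> R) Z m h (tau : nat -> R) : 0 < h ->
  (forall x, 0 <= phi x <= 1) -> breaks phi Z 0 (INR m * h) ->
  (forall j, INR j * h <= tau j <= INR (S j) * h) ->
  Rabs (RInt phi 0 (INR m * h) - h * fsum m (fun j => phi (tau j))) <= 2 * h * INR (length Z).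
Proof.
move=> Hh H01 Hb Ht.
have Hmh : 0 <= INR m * h by apply Rmult_le_pos; [apply pos_INR|lra].
have Hint := breaks_int phi Z 0 (INR m * h) Hmh Hb.
rewrite RInt_split; [|lra|done].
rewrite -fsum_scal -fsum_minus.
apply: Rle_trans; first by apply fsum_abs.
apply: (Rle_trans _ (fsum m (fun j => h * lsum Z (fun z => inI (INR j * h) (INR (S j) * h) z)))).
- apply fsum_le => j Hj.
  have Hjm : INR (S j) * h <= INR m * h.
    apply Rmult_le_compat_r; [lra|apply le_INR; lia].
  have Hj0 : 0 <= INR j * h by apply Rmult_le_pos; [apply pos_INR|lra].
  have Hjj : INR j * h <= INR (S j) * h by rewrite S_INR; lra.
  have HI : ex_RInt phi (INR j * h) (INR (S j) * h) by apply: (ex_RInt_sub _ 0 (INR m * h)) => //; lra.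
  case: (classic (exists z, In z Z /\ INR j * h <= z <= INR (S j) * h)) => Hex.
  + case: Hex => z [Hz1 Hz2].
    have Hl : 1 <= lsum Z (fun z => inI (INR j * h) (INR (S j) * h) z).
      apply: (lsum_ge1 _ _ z) => //. by move=> w; case: (inI_01 (INR j * h) (INR (S j) * h) w).
      rewrite /inI. case: (Rle_dec (INR j * h) z) => ?; case: (Rle_dec z (INR (S j) * h)) => ? /=; lra.
    have R1 : 0 <= RInt phi (INR j * h) (INR (S j) * h).
      rewrite -(Rmult_0_r (INR (S j) * h - INR j * h)) -RInt_const_R.
      apply RInt_le => //. apply ex_RInt_const. move=> x _. by case: (H01 x).
    have R2 : RInt phi (INR j * h) (INR (S j) * h) <= h.
      apply: (Rle_trans _ ((INR (S j) * h - INR j * h) * 1)); last by rewrite S_INR; lra.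
      rewrite -RInt_const_R.
      apply RInt_le => //. apply ex_RInt_const. move=> x _. by case: (H01 x).
    have := H01 (tau j). move=> Hp.
    apply Rabs_le. nra.
  + have Hc : RInt phi (INR j * h) (INR (S j) * h) = (INR (S j) * h - INR j * h) * phi (tau j).
      rewrite -RInt_const_R. apply RInt_ext.
      rewrite Rmin_left // Rmax_right // => x Hx.
      have := Ht j. move=> Htj.
      case: (Rle_dec x (tau j)) => Hxt.
      * apply Hb; try lra. move=> z Hz Hz'. apply Hex. exists z. split => //. lra.
      * symmetry. apply Hb; try lra. move=> z Hz Hz'. apply Hex. exists z. split => //. lra.
    rewrite Hc S_INR.
    have -> : ((INR j + 1) * h - INR j * h) * phi (tau j) - h * phi (tau j) = 0 by ring.
    rewrite Rabs_R0.
    apply Rmult_le_pos; first lra.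
    elim: Z {Hb Hint Hex} => [|w Z IH] /=; first lra.
    have := inI_01 (INR j * h) ((INR j + 1) * h) w. lra.
- rewrite fsum_scal fsum_lsum.
  have := lsum_le Z (fun z => fsum m (fun j => inI (INR j * h) (INR (S j) * h) z)) 2.
  move=> H. have : lsum Z (fun z => fsum m (fun j => inI (INR j * h) (INR (S j) * h) z)) <= 2 * INR (length Z).
    apply H => z. by case: (count2 h z m Hh) => _ [? _].
  move=> H'. nra.
Qed.

Lemma cont_trig k (a al be : nat -> R) :
  continuity (fun t => fsum k (fun j => a j * cos (al j * t + be j))).
Proof.
elim: k => [|k IH] /=.
- apply continuity_const. by move=> x y.
- apply continuity_plus => //. move=> x. reg.
Qed.

Lemma zero_breaks (g : R -> R) Z A B : continuity g ->
  (forall t, A <= t <= B -> Rabs (g t) = 1 -> In t Z) ->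
  breaks (fun t => match Rle_dec 1 (Rabs (g t)) with left _ => 1 | right _ => 0 end) Z A B.
Proof.
move=> Hc HZ x y Hx Hxy Hy Hn.
have Hu : continuity (fun t => Rabs (g t) - 1).
  apply continuity_minus; last by apply continuity_const => ? ?.
  exact: (continuity_comp g Rabs Hc Rcontinuity_abs).
case: (Rle_dec 1 (Rabs (g x))) => H1; case: (Rle_dec 1 (Rabs (g y))) => H2 //=.
- have [z [Hz1 Hz2]] := IVT_cor _ x y Hu Hxy ltac:(nra).
  exfalso. apply: (Hn z) => //. apply HZ. lra. lra.
- have [z [Hz1 Hz2]] := IVT_cor _ x y Hu Hxy ltac:(nra).
  exfalso. apply: (Hn z) => //. apply HZ. lra. lra.
Qed.

Lemma complete_list (P : R -> Prop) N :
  (forall l, NoDup l -> (forall x, In x l -> P x) -> (length l <= N)%coq_nat) ->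
  exists l, (length l <= N)%coq_nat /\ forall x, P x -> In x l.
Proof.
move=> HN.
suff : forall d l, NoDup l -> (forall x, In x l -> P x) -> (N - length l <= d)%coq_nat ->
  exists l', (length l' <= N)%coq_nat /\ forall x, P x -> In x l'.
  move=> H. apply: (H N nil) => //=. constructor. lia.
elim=> [|d IH] l Hl HP Hd.
- case: (classic (forall x, P x -> In x l)) => H.
  + exists l. split => //. by apply HN.
  + exfalso. apply not_all_ex_not in H. case: H => x Hx.
    apply imply_to_and in Hx. case: Hx => Px Nx.
    have := HN (x :: l) (NoDup_cons _ Nx Hl). simpl.
    have : forall y, In y (x :: l) -> P y by move=> y [<-|Hy]; [done|by apply HP].
    move=> H' /(_ H'). lia.
- case: (classic (forall x, P x -> In x l)) => H.
  + exists l. split => //. by apply HN.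
  + apply not_all_ex_not in H. case: H => x Hx.
    apply imply_to_and in Hx. case: Hx => Px Nx.
    apply: (IH (x :: l)).
    * by apply NoDup_cons.
    * by move=> y [<-|Hy]; [done|apply HP].
    * simpl. lia.
Qed.

Lemma Rabs_eq1 x : Rabs x = 1 -> x = 1 \/ x = -1.
Proof. case: (Rcase_abs x) => H. rewrite Rabs_left //. lra. rewrite Rabs_right //. lra. Qed.

Lemma trig_breaks k (a : nat -> R) (n : nat -> Z) (th : nat -> R) (D : nat) :
  (forall j, (j < k)%N -> Z.le (Z.abs (n j)) (Z.of_nat D)) ->
  forall g : R -> R, (forall t, g t = - fsum k (fun j => a j * cos (IZR (n j) * t + th j))) ->
  exists Z, (length Z <= 4 * D + 1)%coq_nat /\
    breaks (fun t => match Rle_dec 1 (Rabs (g t)) with left _ => 1 | right _ => 0 end) Z 0 (2 * PI).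
Proof.
move=> Hn g Hg.
have Hc : continuity g.
  apply: (@continuity_eq (fun t => - fsum k (fun j => a j * cos (IZR (n j) * t + th j))) g).
  by move=> t; rewrite Hg.
  apply continuity_opp. apply (cont_trig k a (fun j => IZR (n j)) th).
have Tp1 := trig_roots k 1 a th n D Hn.
have Tm1 := trig_roots k (-1) a th n D Hn.
case: Tp1 => [H1|H1].
  exists nil. split; first (simpl; lia).
  move=> x y _ _ _ _. have E : forall t, g t = 1.
    move=> t. rewrite Hg. have := H1 t. rewrite /Tp. lra.
  by rewrite !E.
case: Tm1 => [H2|H2].
  exists nil. split; first (simpl; lia).
  move=> x y _ _ _ _. have E : forall t, g t = -1.
    move=> t. rewrite Hg. have := H2 t. rewrite /Tp. lra.
  by rewrite !E.
have [lp [Hlp Hlp']] := complete_list (fun x => 0 <= x < 2 * PI /\ Tp k 1 a th n x = 0) _ H1.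
have [lm [Hlm Hlm']] := complete_list (fun x => 0 <= x < 2 * PI /\ Tp k (-1) a th n x = 0) _ H2.
exists (2 * PI :: lp ++ lm). split.
  simpl. rewrite app_length. lia.
apply zero_breaks => // t Ht Habs.
case: (Req_dec t (2 * PI)) => Ht2; first by left.
right. apply in_or_app.
case: (Rabs_eq1 _ Habs) => Hgt.
- left. apply Hlp'. split; first lra. rewrite /Tp. rewrite Hg in Hgt. lra.
- right. apply Hlm'. split; first lra. rewrite /Tp. rewrite Hg in Hgt. lra.
Qed.

Lemma exists_bound (n : nat -> Z) k :
  exists D : nat, forall j, (j < k)%N -> Z.le (Z.abs (n j)) (Z.of_nat D).
Proof.
elim: k => [|k [D HD]]. by exists 0%N.
exists (Nat.max D (Z.to_nat (Z.abs (n k)))) => j Hj.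
case: (ltngtP j k) => Hjk.
- have := HD j Hjk. lia.
- exfalso. move: Hj Hjk. clear. lia.
- subst. lia.
Qed.

Lemma RInt_fsum m (F : nat -> R -> R) a b : (forall j, (j < m)%coq_nat -> ex_RInt (F j) a b) ->
  ex_RInt (fun y => fsum m (fun j => F j y)) a b /\
  RInt (fun y => fsum m (fun j => F j y)) a b = fsum m (fun j => RInt (F j) a b).
Proof.
elim: m => [|m IH] H /=.
- split; first by apply ex_RInt_const. rewrite RInt_const_R. ring.
- have [H1 H2] := IH (fun j Hj => H j ltac:(lia)).
  have H3 := H m ltac:(lia).
  split.
  + exact: (ex_RInt_plus _ _ _ _ H1 H3).
  + rewrite -H2. exact: (RInt_plus _ _ _ _ H1 H3).
Qed.

Section Main.
Variables (k : nat) (a : nat -> R) (e1 e2 : nat -> Z).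
Local Notation f := (g2bar k a e1 e2).

Lemma g2bar01 t1 t2 : 0 <= f t1 t2 <= 1.
Proof. rewrite /g2bar. case: (Rle_dec _ _) => _; lra. Qed.

Lemma inner_breaks : exists D : nat, forall s, exists Z, (length Z <= 4 * D + 1)%coq_nat /\
  breaks (fun t => f t s) Z 0 (2 * PI).
Proof.
have [D HD] := exists_bound e1 k. exists D => s.
have [Z [H1 H2]] := trig_breaks k a e1 (fun j => IZR (e2 j) * s) D HD (fun t => g2_torus k a e1 e2 t s)
  ltac:(move=> t; reflexivity).
exists Z; split; [exact H1|exact H2].
Qed.

Lemma inner_int s : ex_RInt (fun t => f t s) 0 (2 * PI).
Proof.
have [D HD] := inner_breaks. have [Z [_ HZ]] := HD s.
apply: (breaks_int _ Z) => //. have := PI_RGT_0. lra.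
Qed.

Lemma curve_int m : ex_RInt (fun t => f t (INR m * t)) 0 (2 * PI).
Proof.
set n := fun j => Z.add (e1 j) (Z.mul (Z.of_nat m) (e2 j)).
have [D HD] := exists_bound n k.
have [Z [_ HZ]] := trig_breaks k a n (fun _ => 0) D HD (fun t => g2_torus k a e1 e2 t (INR m * t))
  ltac:(move=> t; rewrite /g2_torus; f_equal; apply fsum_ext => j _; f_equal; f_equal;
        rewrite /n plus_IZR mult_IZR -INR_IZR_INZ; ring).
apply: (breaks_int _ Z) => //. have := PI_RGT_0. lra.
Qed.
End Main.

Section Main2.
Variables (k : nat) (a : nat -> R) (e1 e2 : nat -> Z).
Local Notation f := (g2bar k a e1 e2).

Definition Hm (m : nat) (y : R) := / INR m * fsum m (fun j => f ((y + 2 * PI * INR j) / INR m) y).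

Lemma scalR (u x : R) : scal u x = u * x.
Proof. reflexivity. Qed.

Lemma curve_eq m : (0 < m)%coq_nat ->
  ex_RInt (Hm m) 0 (2 * PI) /\ RInt (fun t => f t (INR m * t)) 0 (2 * PI) = RInt (Hm m) 0 (2 * PI).
Proof.
move=> Hm0.
have HmR : 0 < INR m by apply lt_0_INR.
have PIp := PI_RGT_0.
set h := 2 * PI / INR m.
have Hh : 0 < h by rewrite /h; apply Rdiv_lt_0_compat; lra.
have HT : 2 * PI = INR m * h by rewrite /h; field; lra.
set cf := fun t => f t (INR m * t).
have Hcf := curve_int k a e1 e2 m. rewrite -/cf in Hcf.
set psi := fun j y => f ((y + 2 * PI * INR j) / INR m) y.
have Hpiece : forall j, (j < m)%coq_nat ->
  ex_RInt (psi j) 0 (2 * PI) /\ RInt cf (INR j * h) (INR (S j) * h) = / INR m * RInt (psi j) 0 (2 * PI).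
  move=> j Hj.
  have E1 : forall y, / INR m * y + INR j * h = (y + 2 * PI * INR j) / INR m.
    move=> y. rewrite /h. field. lra.
  have E2 : / INR m * 0 + INR j * h = INR j * h by ring.
  have E3 : / INR m * (2 * PI) + INR j * h = INR (S j) * h by rewrite S_INR /h; field; lra.
  have Hsub : ex_RInt cf (/ INR m * 0 + INR j * h) (/ INR m * (2 * PI) + INR j * h).
    rewrite E2 E3. apply: (ex_RInt_sub _ 0 (2 * PI)) => //.
    apply Rmult_le_pos; [apply pos_INR|lra].
    rewrite S_INR; lra.
    rewrite HT. apply Rmult_le_compat_r; [lra|apply le_INR; lia].
  have Hext : forall y, scal (/ INR m) (cf (/ INR m * y + INR j * h)) = / INR m * psi j y.
    move=> y. rewrite scalR /cf /psi E1. f_equal.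
    have -> : INR m * ((y + 2 * PI * INR j) / INR m) = y + 2 * PI * INR j by field; lra.
    by rewrite g2bar_per.
  have Hc1 := ex_RInt_comp_lin cf (/ INR m) (INR j * h) 0 (2 * PI) Hsub.
  have Hc2 := RInt_comp_lin cf (/ INR m) (INR j * h) 0 (2 * PI) Hsub.
  have Hpsi : ex_RInt (psi j) 0 (2 * PI).
    have := ex_RInt_scal _ 0 (2 * PI) (INR m) Hc1.
    apply: ex_RInt_ext => y _. rewrite scalR Hext -Rmult_assoc Rinv_r ?Rmult_1_l //; lra.
  split => //.
  rewrite E2 E3 in Hc2. rewrite -Hc2.
  rewrite (RInt_ext _ (fun y => scal (/ INR m) (psi j y))).
    by rewrite RInt_scal.
  move=> y _. by rewrite Hext.
have [HF1 HF2] := RInt_fsum m psi 0 (2 * PI) (fun j Hj => proj1 (Hpiece j Hj)).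
have HH : ex_RInt (Hm m) 0 (2 * PI).
  have := ex_RInt_scal _ 0 (2 * PI) (/ INR m) HF1. apply: ex_RInt_ext => y _. reflexivity.
split => //.
rewrite HT RInt_split; [|lra|by rewrite -HT].
rewrite (fsum_ext m _ (fun j => / INR m * RInt (psi j) 0 (2 * PI))); last first.
  by move=> j Hj; case: (Hpiece j Hj).
rewrite fsum_scal -HF2 -HT.
rewrite -scalR -(RInt_scal (fun y => fsum m (fun j => psi j y))) //.
Qed.
End Main2.

Section Main3.
Variables (k : nat) (a : nat -> R) (e1 e2 : nat -> Z).
Local Notation f := (g2bar k a e1 e2).
Definition Fin (s : R) := RInt (fun t => f t s) 0 (2 * PI).

Lemma err_bound : exists D : nat, forall m s, (0 < m)%coq_nat -> 0 <= s <= 2 * PI ->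
  Rabs (Fin s - 2 * PI * Hm k a e1 e2 m s) <= 2 * (2 * PI / INR m) * INR (4 * D + 1).
Proof.
have [D HD] := inner_breaks k a e1 e2. exists D => m s Hm0 Hs.
have HmR : 0 < INR m by apply lt_0_INR.
have PIp := PI_RGT_0.
set h := 2 * PI / INR m.
have Hh : 0 < h by rewrite /h; apply Rdiv_lt_0_compat; lra.
have HT : 2 * PI = INR m * h by rewrite /h; field; lra.
have [Z [HZ1 HZ2]] := HD s.
have E : 2 * PI * Hm k a e1 e2 m s = h * fsum m (fun j => f ((s + 2 * PI * INR j) / INR m) s).
  rewrite /Hm /h. field. lra.
rewrite E.
have -> : Fin s = RInt (fun t => f t s) 0 (INR m * h) by rewrite /Fin -HT.
rewrite HT in HZ2.
apply: Rle_trans.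
  apply: (riemann_err (fun t => f t s) Z m h (fun j => (s + 2 * PI * INR j) / INR m)) => //.
  - move=> x. exact: g2bar01.
  - move=> j. rewrite S_INR /h. split.
    + apply (Rmult_le_reg_r (INR m)) => //. field_simplify; [|lra|lra]. nra.
    + apply (Rmult_le_reg_r (INR m)) => //. field_simplify; [|lra|lra]. nra.
apply Rmult_le_compat_l; first lra. apply le_INR. done.
Qed.
End Main3.

Lemma RInt_lin (u v : R -> R) c a b : ex_RInt u a b -> ex_RInt v a b ->
  ex_RInt (fun s => c * u s - v s) a b /\
  RInt (fun s => c * u s - v s) a b = c * RInt u a b - RInt v a b.
Proof.
move=> Hu Hv.
have Hcu := ex_RInt_scal _ a b c Hu.
split.
- have := ex_RInt_minus _ _ a b Hcu Hv. apply ex_RInt_ext => x _. reflexivity.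
- have := RInt_minus _ _ a b Hcu Hv. by rewrite RInt_scal //.
Qed.

Lemma ballR (x y eps : R) : Rabs (y - x) < eps -> ball x eps y.
Proof. move=> H. rewrite /ball /= /AbsRing_ball /abs /minus /plus /opp /=. exact H. Qed.

Section Main4.
Variables (k : nat) (a : nat -> R) (e1 e2 : nat -> Z).
Local Notation f := (g2bar k a e1 e2).

Lemma Fin_int : ex_RInt (Fin k a e1 e2) 0 (2 * PI).
Proof.
have [D HD] := err_bound k a e1 e2.
have PIp := PI_RGT_0.
set F := Fin k a e1 e2.
set Fm := fun (n : nat) s => if Rle_dec 0 s then if Rle_dec s (2 * PI) then 2 * PI * Hm k a e1 e2 (S n) s else F s else F s.
have Hi : forall n, is_RInt (Fm n) 0 (2 * PI) (RInt (Fm n) 0 (2 * PI)).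
  move=> n.
  suff Hex : ex_RInt (Fm n) 0 (2 * PI) by exact (RInt_correct _ _ _ Hex).
  have [HH _] := curve_eq k a e1 e2 (S n) ltac:(lia).
  have := ex_RInt_scal _ 0 (2 * PI) (2 * PI) HH.
  apply ex_RInt_ext => x. rewrite Rmin_left; last lra. rewrite Rmax_right; last lra.
  move=> Hx. rewrite /Fm. case: (Rle_dec 0 x) => H1; last lra. case: (Rle_dec x (2 * PI)) => H2 //; lra.
have Hl : filterlim Fm eventually (locally F).
  apply/filterlim_locally => eps.
  have [N HN] := INR_archimed eps (2 * (2 * PI) * INR (4 * D + 1)) (cond_pos eps).
  exists N => n Hn t. apply ballR.
  rewrite /Fm. case: (Rle_dec 0 t) => H1; last by rewrite Rminus_diag Rabs_R0; apply cond_pos.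
  case: (Rle_dec t (2 * PI)) => H2; last by rewrite Rminus_diag Rabs_R0; apply cond_pos.
  rewrite Rabs_minus_sym. apply: Rle_lt_trans; first by apply HD; [lia|lra].
  have HSn : INR N < INR (S n) by apply lt_INR; lia.
  have HSn0 : 0 < INR (S n) by apply lt_0_INR; lia.
  have Hp : 0 <= INR (4 * D + 1) by apply pos_INR.
  have HNe : 0 <= INR N * eps by apply Rmult_le_pos; [apply pos_INR|have := cond_pos eps; lra].
  apply (Rmult_lt_reg_r (INR (S n))) => //.
  have -> : 2 * (2 * PI / INR (S n)) * INR (4 * D + 1) * INR (S n) = 2 * (2 * PI) * INR (4 * D + 1) by field; lra.
  have := cond_pos eps. nra.
have [If [_ HIf]] := filterlim_RInt Fm 0 (2 * PI) eventually _ F (fun n => RInt (Fm n) 0 (2 * PI)) Hi Hl.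
by exists If.
Qed.

Theorem theorem3_main : Un_cv (fun n => LC_curve k a e1 e2 (S n)) (LC_torus k a e1 e2).
Proof.
have [D HD] := err_bound k a e1 e2.
have PIp := PI_RGT_0.
have HF := Fin_int.
have Elt : LC_torus k a e1 e2 = / ((2 * PI) ^ 2) * RInt (Fin k a e1 e2) 0 (2 * PI).
  rewrite /LC_torus.
  have -> : (fun t2 => Rint (fun t1 => f t1 t2) 0 (2 * PI)) = Fin k a e1 e2.
    apply functional_extensionality => t2. rewrite Rint_RInt //. apply inner_int.
  by rewrite Rint_RInt.
move=> eps Heps.
have [N HN] := INR_archimed eps (2 * INR (4 * D + 1)) Heps.
exists N => n Hn.
have [HH Hc] := curve_eq k a e1 e2 (S n) ltac:(lia).
have Elc : LC_curve k a e1 e2 (S n) = / (2 * PI) * RInt (Hm k a e1 e2 (S n)) 0 (2 * PI).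
  rewrite /LC_curve Rint_RInt; last by apply curve_int.
  by rewrite Hc.
rewrite /R_dist Elc Elt.
have [Hl1 Hl2] := RInt_lin (Hm k a e1 e2 (S n)) (Fin k a e1 e2) (2 * PI) 0 (2 * PI) HH HF.
have -> : / (2 * PI) * RInt (Hm k a e1 e2 (S n)) 0 (2 * PI) - / (2 * PI) ^ 2 * RInt (Fin k a e1 e2) 0 (2 * PI)
  = / (2 * PI) ^ 2 * (2 * PI * RInt (Hm k a e1 e2 (S n)) 0 (2 * PI) - RInt (Fin k a e1 e2) 0 (2 * PI)).
  field. lra.
rewrite -Hl2 Rabs_mult Rabs_right; last first.
  apply Rle_ge. apply Rlt_le. apply Rinv_0_lt_compat. apply pow_lt. lra.
have HSn0 : 0 < INR (S n) by apply lt_0_INR; lia.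
set M := 2 * (2 * PI / INR (S n)) * INR (4 * D + 1).
have Hb : Rabs (RInt (fun s => 2 * PI * Hm k a e1 e2 (S n) s - Fin k a e1 e2 s) 0 (2 * PI)) <= (2 * PI - 0) * M.
  apply abs_RInt_le_const => //; first lra.
  move=> t Ht. rewrite Rabs_minus_sym. apply HD => //. lia.
apply: Rle_lt_trans.
  apply Rmult_le_compat_l; last by apply Hb.
  apply Rlt_le. apply Rinv_0_lt_compat. apply pow_lt. lra.
have -> : / (2 * PI) ^ 2 * ((2 * PI - 0) * M) = 2 * INR (4 * D + 1) / INR (S n).
  rewrite /M. field. split; lra.
have HSn : INR N < INR (S n) by apply lt_INR; lia.
have Hp : 0 <= INR (4 * D + 1) by apply pos_INR.
apply (Rmult_lt_reg_r (INR (S n))) => //.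
have -> : 2 * INR (4 * D + 1) / INR (S n) * INR (S n) = 2 * INR (4 * D + 1) by field; lra.
have HNe : 0 <= INR N by apply pos_INR.
nra.
Qed.
End Main4.

Theorem theorem3 (k : nat) (a : nat -> R) (e1 e2 : nat -> Z) :
  Un_cv (fun n => LC_curve k a e1 e2 (S n)) (LC_torus k a e1 e2).
Proof. exact (theorem3_main k a e1 e2). Qed.
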